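(* Let $Y$ be a real Banach space. The norm of $Y$ is Gâteaux differentiable (at every nonzero point) if and only if every closed linear subspace $X$ of $Y$ has property wU in $Y$.
   Context: A closed subspace $X$ of a Banach space $Y$ has property wU in $Y$ if every norm-attaining functional $x^*\in X^*$ (i.e. $x^*(x)=\|x^*\|$ for some $x$ in the unit sphere of $X$) has a unique Hahn–Banach extension to $Y$, i.e. there is exactly one $y^*\in Y^*$ with $y^*|_X=x^*$ and $\|y^*\|=\|x^*\|$. *)

(* Defs.v *)
From HB Require Import structures.
From mathcomp Require Import all_boot all_order all_algebra.
From mathcomp Require Import all_classical all_reals all_analysis.
Set Implicit Arguments. Unset Strict Implicit. Unset Printing Implicit Defensive.
Import Order.TTheory GRing.Theory Num.Theory.
Import numFieldNormedType.Exports.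
Local Open Scope classical_set_scope.
Local Open Scope ring_scope.

Section Defs.
Variables (R : realType) (Y : normedModType R).

Definition linear_on (X : set Y) (f : Y -> R) : Prop :=
  forall (a : R) (x y : Y), X x -> X y -> f (a *: x + y) = a * f x + f y.

Definition lin_subspace (X : set Y) : Prop :=
  X 0 /\ (forall (a : R) (x y : Y), X x -> X y -> X (a *: x + y)).

(** An element of the dual X^* of the subspace X: a continuous linear
    functional on X (represented by a function on Y whose values outside
    X are irrelevant). *)
Definition dual_elt (X : set Y) (f : Y -> R) : Prop :=
  linear_on X f /\ {within X, continuous f}.

Definition dual_norm (X : set Y) (f : Y -> R) : R :=
  sup [set `|f x| | x in [set x | X x /\ `|x| <= 1]].

Definition norm_attaining (X : set Y) (f : Y -> R) : Prop :=
  exists x, X x /\ `|x| = 1 /\ f x = dual_norm X f.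

Definition HB_extension (X : set Y) (f g : Y -> R) : Prop :=
  dual_elt setT g /\ (forall x, X x -> g x = f x) /\
  dual_norm setT g = dual_norm X f.

Definition unique_HB_extension (X : set Y) (f : Y -> R) : Prop :=
  exists g, HB_extension X f g /\
    forall g', HB_extension X f g' -> g' = g.

Definition property_wU (X : set Y) : Prop :=
  forall f, dual_elt X f -> norm_attaining X f -> unique_HB_extension X f.

Definition norm_gateaux_at (x : Y) : Prop :=
  exists g : Y -> R, dual_elt setT g /\
    forall h : Y, derivable (fun y : Y => (`|y| : R^o)) x h /\
                  'D_h (fun y : Y => (`|y| : R^o)) x = g h.

Definition norm_gateaux : Prop := forall x : Y, x != 0 -> norm_gateaux_at x.

End Defs.

(* Main.v *)
Require Import Defs.
From HB Require Import structures.
From mathcomp Require Import all_boot all_order all_algebra.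
From mathcomp Require Import all_classical all_reals all_analysis.
From mathcomp Require Import ring lra.
Set Implicit Arguments. Unset Strict Implicit. Unset Printing Implicit Defensive.
Import Order.TTheory GRing.Theory Num.Theory.
Import numFieldNormedType.Exports.
Local Open Scope classical_set_scope.
Local Open Scope ring_scope.

Section S.
Variables (R : realType) (Y : normedModType R).

Lemma near_normP (x : Y) (P : Y -> Prop) :
  (\forall y \near x, P y) <-> exists2 e : R, 0 < e & forall y, `|x - y| < e -> P y.
Proof.
rewrite -nbhs_normE; split.
  by case=> e e0 H; exists e => // y; apply: H.
by case=> e e0 H; exists e.
Qed.

Lemma near_within_normP (x : Y) (A : set Y) (P : Y -> Prop) :
  (\forall y \near within A (nbhs x), P y) <->
  exists2 e : R, 0 < e & forall y, `|x - y| < e -> A y -> P y.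
Proof. rewrite /within /=. exact: near_normP. Qed.

Lemma near0R (P : R -> Prop) :
  (\forall t \near (0:R)^', P t) <-> exists2 e : R, 0 < e & forall t, `|t| < e -> t != 0 -> P t.
Proof.
rewrite /within /=; split.
  case=> e e0 H; exists e => // t te; apply: H => /=. by rewrite sub0r normrN.
case=> e e0 H; exists e => // t /= te; apply: H. by rewrite sub0r normrN in te.
Qed.

Section Lin.
Variables (X : set Y) (f : Y -> R).
Hypothesis (sX : lin_subspace X) (lf : linear_on X f).

Lemma sub0 : X 0. Proof. by case: sX. Qed.
Lemma subZD a x y : X x -> X y -> X (a *: x + y). Proof. by case: sX => _; apply. Qed.
Lemma subZ a x : X x -> X (a *: x).
Proof. by move=> Xx; rewrite -[_ *: _]addr0; apply: subZD => //; exact: sub0. Qed.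
Lemma subD x y : X x -> X y -> X (x + y).
Proof. by move=> Xx Xy; rewrite -[x]scale1r; apply: subZD. Qed.
Lemma subN x : X x -> X (- x).
Proof. by move=> Xx; rewrite -scaleN1r; apply: subZ. Qed.
Lemma subB x y : X x -> X y -> X (x - y).
Proof. by move=> Xx Xy; apply: subD => //; apply: subN. Qed.

Lemma lin0 : f 0 = 0.
Proof.
have := lf 1 sub0 sub0; rewrite scale1r addr0 => h. lra.
Qed.
Lemma linZ a x : X x -> f (a *: x) = a * f x.
Proof.
move=> Xx; have := lf a Xx sub0; rewrite addr0 lin0 addr0 //.
Qed.
Lemma linD x y : X x -> X y -> f (x + y) = f x + f y.
Proof. by move=> Xx Xy; have := lf 1 Xx Xy; rewrite scale1r mul1r. Qed.
Lemma linN x : X x -> f (- x) = - f x.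
Proof. by move=> Xx; rewrite -scaleN1r linZ // mulN1r. Qed.
Lemma linB x y : X x -> X y -> f (x - y) = f x - f y.
Proof. by move=> Xx Xy; rewrite linD ?linN //; apply: subN. Qed.

End Lin.

Lemma dual_bounded (X : set Y) (f : Y -> R) : lin_subspace X -> dual_elt X f ->
  exists2 M : R, 0 < M & forall y, X y -> `|f y| <= M * `|y|.
Proof.
move=> sX [lf /subspace_continuousP cf].
have := cf 0 (sub0 sX); move/cvgrPdist_lt => /(_ 1 ltr01).
rewrite near_within_normP => -[e e0 H].
move: H; rewrite /from_subspace (lin0 sX lf) => H.

exists (2 / e); first by rewrite divr_gt0.
move=> y Xy; have [->|y0] := eqVneq y 0.
  by rewrite (lin0 sX lf) !normr0 mulr0.
have ny0 : 0 < `|y| by rewrite normr_gt0.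
set c := e / (2 * `|y|).
have ep : 0 < c by rewrite divr_gt0 // mulr_gt0.
have Hc : `|c *: y| < e.
  rewrite normrZ gtr0_norm // /c.
  have -> : e / (2 * `|y|) * `|y| = e / 2 by field; rewrite gt_eqF.
  lra.
have := H (c *: y); rewrite sub0r normrN => /(_ Hc (subZ sX _ Xy)).
rewrite sub0r normrN (linZ sX lf) // normrM gtr0_norm // => h.
rewrite -(ler_pM2l ep); apply/ltW; apply: (lt_le_trans h).
rewrite /c le_eqVlt; apply/orP; left; apply/eqP; field.
by rewrite !gt_eqF.
Qed.

Section DN.
Variables (X : set Y) (f : Y -> R).
Hypothesis (sX : lin_subspace X).

Lemma dual_norm_le (c : R) : (forall y, X y -> `|y| <= 1 -> `|f y| <= c) ->
  dual_norm X f <= c.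
Proof.
move=> H; apply: ge_sup.
  by exists `|f 0|, 0; split => //; [exact: sub0 | rewrite normr0].
by move=> r [y [Xy y1] <-]; apply: H.
Qed.

Hypothesis (df : dual_elt X f).

Lemma dual_norm_ub y : X y -> `|y| <= 1 -> `|f y| <= dual_norm X f.
Proof.
move=> Xy y1; have [M M0 HM] := dual_bounded sX df.
apply: ub_le_sup; last by exists y.
exists M => r [z [Xz z1] <-]; apply: (le_trans (HM _ Xz)).
by rewrite ler_piMr // ltW.
Qed.

Lemma dual_norm_ge0 : 0 <= dual_norm X f.
Proof.
have := dual_norm_ub (sub0 sX); rewrite normr0 (lin0 sX df.1) normr0; apply.
exact: ler01.
Qed.

Lemma dual_norm_bound y : X y -> `|f y| <= dual_norm X f * `|y|.
Proof.
move=> Xy; have [->|y0] := eqVneq y 0.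
  by rewrite (lin0 sX df.1) !normr0 mulr0.
have ny0 : 0 < `|y| by rewrite normr_gt0.
have := dual_norm_ub (subZ sX (`|y|^-1) Xy).
have ny0' : 0 <= `|y|^-1 by rewrite invr_ge0 ltW.
rewrite normrZ (linZ sX df.1) // normrM ger0_norm //.
rewrite mulVf ?gt_eqF // => /(_ (lexx _)).
move=> h; rewrite mulrC -ler_pdivrMl //.
Qed.

End DN.

Definition q (x h : Y) (t : R) : R := t^-1 * (`|t *: h + x| - `|x|).

Lemma gat_cvg (x : Y) (D : Y -> R) h :
  derivable (fun y : Y => (`|y| : R^o)) x h ->
  'D_h (fun y : Y => (`|y| : R^o)) x = D h ->
  q x h @ 0^' --> D h.
Proof.
move=> dh <-. exact: dh.
Qed.

Lemma cvg_gat (x : Y) (L : R) h : q x h @ 0^' --> L ->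
  derivable (fun y : Y => (`|y| : R^o)) x h /\
  'D_h (fun y : Y => (`|y| : R^o)) x = L.
Proof.
move=> H; split; first by apply/cvgP; exact: H.
by apply: cvg_lim => //; exact: H.
Qed.

Section Lim.
Variables (g : R -> R) (L : R).
Hypothesis (gL : g @ 0^' --> L).

Lemma lim_close eps : 0 < eps ->
  exists2 d : R, 0 < d & forall t, `|t| < d -> t != 0 -> `|L - g t| < eps.
Proof. by move=> e0; move/cvgrPdist_lt: gL => /(_ _ e0) /near0R. Qed.

Lemma lim_ge_pos M : (forall t, 0 < t -> M <= g t) -> M <= L.
Proof.
move=> H; rewrite leNgt; apply/negP => LM.
have e0 : 0 < M - L by rewrite subr_gt0.
have [d d0 Hd] := lim_close e0.
have t0 : 0 < d / 2 by rewrite divr_gt0.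
have := Hd (d / 2); rewrite gtr0_norm // gt_eqF // => /(_ ltac:(lra) isT).
have := H _ t0; have := ler_norm (L - g (d / 2)); have := ler_norm (g (d / 2) - L).
rewrite [`|g _ - L|]distrC. lra.
Qed.

Lemma lim_le_pos M : (forall t, 0 < t -> g t <= M) -> L <= M.
Proof.
move=> H; rewrite leNgt; apply/negP => LM.
have e0 : 0 < L - M by rewrite subr_gt0.
have [d d0 Hd] := lim_close e0.
have t0 : 0 < d / 2 by rewrite divr_gt0.
have := Hd (d / 2); rewrite gtr0_norm // gt_eqF // => /(_ ltac:(lra) isT).
have := H _ t0; have := ler_norm (L - g (d / 2)); have := ler_norm (g (d / 2) - L).
rewrite [`|g _ - L|]distrC. lra.
Qed.

Lemma lim_ge_neg M : (forall t, t < 0 -> M <= g t) -> M <= L.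
Proof.
move=> H; rewrite leNgt; apply/negP => LM.
have e0 : 0 < M - L by rewrite subr_gt0.
have [d d0 Hd] := lim_close e0.
have t0 : - (d / 2) < 0 by rewrite oppr_lt0 divr_gt0.
have := Hd (- (d / 2)); rewrite normrN gtr0_norm ?divr_gt0 // lt_eqF //.
move=> /(_ ltac:(lra) isT).
have := H _ t0; have := ler_norm (L - g (- (d / 2))); have := ler_norm (g (- (d / 2)) - L).
rewrite [`|g _ - L|]distrC. lra.
Qed.

Lemma lim_le_neg M : (forall t, t < 0 -> g t <= M) -> L <= M.
Proof.
move=> H; rewrite leNgt; apply/negP => LM.
have e0 : 0 < L - M by rewrite subr_gt0.
have [d d0 Hd] := lim_close e0.
have t0 : - (d / 2) < 0 by rewrite oppr_lt0 divr_gt0.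
have := Hd (- (d / 2)); rewrite normrN gtr0_norm ?divr_gt0 // lt_eqF //.
move=> /(_ ltac:(lra) isT).
have := H _ t0; have := ler_norm (L - g (- (d / 2))); have := ler_norm (g (- (d / 2)) - L).
rewrite [`|g _ - L|]distrC. lra.
Qed.
End Lim.

Lemma mulKt (t a : R) : t != 0 -> t * (t^-1 * a) = a.
Proof. by move=> t0; rewrite mulrA mulfV // mul1r. Qed.

Lemma support_eq (x0 : Y) (D : Y -> R) (Z : set Y) (phi : Y -> R) :
  lin_subspace Z -> linear_on Z phi -> Z x0 ->
  (forall z, Z z -> phi z <= `|z|) -> phi x0 = `|x0| ->
  forall y, Z y -> q x0 y @ 0^' --> D y -> phi y = D y.
Proof.
move=> sZ lphi Zx0 Hb Hx0 y Zy cv.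
have key t : t * phi y <= `|t *: y + x0| - `|x0|.
  have := Hb _ (subZD sZ t Zy Zx0); rewrite lphi // Hx0. lra.
apply/eqP; rewrite eq_le; apply/andP; split.
- apply: (lim_ge_pos cv) => t t0; rewrite /q -(ler_pM2l t0) mulKt ?gt_eqF //.
- apply: (lim_le_neg cv) => t t0; rewrite /q -(ler_nM2l t0) mulKt ?lt_eqF //.
Qed.

Lemma subT : lin_subspace (@setT Y). Proof. by split. Qed.

Lemma scaled_support (x0 : Y) (D : Y -> R) (Z : set Y) (F : Y -> R) :
  lin_subspace Z -> dual_elt Z F -> 0 < dual_norm Z F -> Z x0 -> `|x0| = 1 ->
  F x0 = dual_norm Z F -> (forall h, q x0 h @ 0^' --> D h) ->
  forall y, Z y -> F y = dual_norm Z F * D y.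
Proof.
move=> sZ dF n0 Zx0 nx0 Fx0 cv y Zy.
set n := dual_norm Z F in n0 Fx0 *.
have -> : F y = n * (F y / n) by field; rewrite gt_eqF.
congr (_ * _).
apply: (support_eq (phi := fun y => F y / n) sZ _ Zx0 _ _ Zy (cv y)).
- by move=> a u v Zu Zv /=; rewrite dF.1 //; field; rewrite gt_eqF.
- move=> z Zz /=; rewrite ler_pdivrMr // mulrC.
  apply: le_trans (ler_norm _) _; exact: dual_norm_bound.
- by rewrite Fx0 nx0 mulfV ?gt_eqF.
Qed.

Lemma D_bound (x0 : Y) (D : Y -> R) : `|x0| = 1 -> linear_on setT D ->
  (forall h, q x0 h @ 0^' --> D h) -> forall y, `|D y| <= `|y|.
Proof.
move=> nx0 lD cv.
have H y : D y <= `|y|.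
  apply: (lim_le_pos (cv y)) => t t0; rewrite /q -(ler_pM2l t0) mulKt ?gt_eqF //.
  have := ler_normD (t *: y) x0; rewrite normrZ gtr0_norm //. lra.
move=> y; rewrite ler_norml H andbT.
have := H (- y); rewrite (linN subT lD) // normrN. lra.
Qed.

Lemma D_x0 (x0 : Y) (D : Y -> R) : `|x0| = 1 ->
  (forall h, q x0 h @ 0^' --> D h) -> D x0 = 1.
Proof.
move=> nx0 cv.
have E t : 0 < t -> q x0 x0 t = 1.
  move=> t0; rewrite /q -{2}[x0]scale1r -scalerDl normrZ nx0 mulr1.
  rewrite gtr0_norm; last lra.
  by rewrite addrK mulVf ?gt_eqF.
apply/eqP; rewrite eq_le; apply/andP; split.
- by apply: (lim_le_pos (cv x0)) => t t0; rewrite E.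
- by apply: (lim_ge_pos (cv x0)) => t t0; rewrite E.
Qed.

Lemma dual_scale (D : Y -> R) (n : R) : dual_elt setT D -> dual_elt setT (fun y => n * D y).
Proof.
move=> [lD cD]; split.
  by move=> a u v _ _; rewrite lD //; ring.
apply/subspace_continuousP => x _.
move/subspace_continuousP : cD => /(_ x I) cD.
rewrite /from_subspace in cD *. exact: cvgMl_tmp.
Qed.

Lemma forward : norm_gateaux Y ->
  forall X : set Y, closed X -> lin_subspace X -> property_wU X.
Proof.
move=> G X _ sX f df [x0 [Xx0 [nx0 fx0]]].
have x0ne : x0 != 0 by rewrite -normr_eq0 nx0 oner_eq0.
have [D [dD HD]] := G x0 x0ne.
have cv h : q x0 h @ 0^' --> D h := gat_cvg (HD h).1 (HD h).2.
set n := dual_norm X f in fx0 *.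
have n0 : 0 <= n := dual_norm_ge0 sX df.
have dg := dual_scale n dD.
have DB := D_bound nx0 dD.1 cv.
have Dx0 := D_x0 nx0 cv.
exists (fun y => n * D y); split.
- split => //; split.
  + move=> x Xx; have [n00|n0'] := eqVneq n 0.
      rewrite n00 mul0r; apply: esym; apply/eqP; rewrite -normr_eq0 eq_le normr_ge0 andbT.
      by have := dual_norm_bound sX df Xx; rewrite -/n n00 mul0r.
    have np : 0 < n by rewrite lt_neqAle eq_sym n0' n0.
    by rewrite (scaled_support sX df np Xx0 nx0 fx0 cv Xx).
  + apply/eqP; rewrite eq_le; apply/andP; split.
      apply: (dual_norm_le subT) => y _ y1; rewrite normrM ger0_norm //.
      apply: (le_trans (ler_wpM2l n0 (DB y))); exact: ler_piMr.
    have := dual_norm_ub subT dg (I : setT x0); rewrite nx0 => /(_ (lexx _)).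
    by rewrite Dx0 mulr1 ger0_norm.
- move=> g' [dg' [eg' ng']].
  apply/funext => y.
  have [n00|n0'] := eqVneq n 0.
    rewrite n00 mul0r; apply/eqP; rewrite -normr_eq0 eq_le normr_ge0 andbT.
    by have := dual_norm_bound subT dg' (I : setT y); rewrite ng' -/n n00 mul0r.
  have np : 0 < n by rewrite lt_neqAle eq_sym n0' n0.
  rewrite -/n in ng'.
  have := scaled_support (x0:=x0) (D:=D) subT dg'; rewrite ng' => /(_ np I nx0).
  by rewrite eg' // fx0 => /(_ erefl cv y I).
Qed.

Definition coef (u y : Y) : R := xget 0 [set t | y = t *: u].
Definition line (u : Y) : set Y := [set y | exists t, y = t *: u].

Lemma coefZ u t : u != 0 -> coef u (t *: u) = t.
Proof.
move=> u0; apply: xget_unique => // s /eqP; rewrite -subr_eq0 -scalerBl.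
by rewrite scaler_eq0 (negbTE u0) orbF subr_eq0 => /eqP.
Qed.

Lemma line_sub u : lin_subspace (line u).
Proof.
split; first by exists 0; rewrite scale0r.
by move=> a _ _ [s ->] [t ->]; exists (a * s + t); rewrite scalerDl scalerA.
Qed.

Lemma line_closed u : u != 0 -> closed (line u).
Proof.
move=> u0 y cy.
have nu : 0 < `|u| by rewrite normr_gt0.
set M := (`|y| + 1) / `|u|.
set K := (fun t : R => t *: u) @` `[-M, M].
have cK : closed K.
  apply: compact_closed; first exact: norm_hausdorff.
  apply: continuous_compact; last exact: segment_compact.
  apply: continuous_subspaceT; exact: scalel_continuous.
suff : K y by case=> t _ <-; exists t.
apply: cK => B By.
have B1 : nbhs y (B `&` [set z | `|y - z| < 1]).
  apply: filterI => //; apply/near_normP; by exists 1.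
have [z [[t ->] [Bz yz]]] := cy _ B1.
exists (t *: u); split => //; exists t => //.
rewrite /= in_itv /= -ler_norml /M ler_pdivlMr //.
have := ler_normD (t *: u - y) y; rewrite subrK distrC normrZ.
move: yz => /= yz. lra.
Qed.

Lemma bounded_cont (X : set Y) (f : Y -> R) (M : R) : lin_subspace X -> linear_on X f ->
  0 <= M -> (forall y, X y -> `|f y| <= M * `|y|) -> {within X, continuous f}.
Proof.
move=> sX lf M0 Hb; apply/subspace_continuousP => z Xz.
rewrite /from_subspace; apply/cvgrPdist_lt => e e0.
apply/near_within_normP; exists (e / (M + 1)); first by rewrite divr_gt0 // ltr_wpDl.
move=> w zw Xw; rewrite -(linB sX lf) //.
apply: (le_lt_trans (Hb _ (subB sX Xz Xw))).
have M1 : 0 < M + 1 by lra.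
rewrite ltr_pdivlMr // in zw.
have : M * `|z - w| <= (M + 1) * `|z - w| by rewrite ler_wpM2r // lerDl.
have := normr_ge0 (z - w). nra.
Qed.

Lemma q_mono (x h : Y) (s t : R) : 0 < s -> s <= t -> q x h s <= q x h t.
Proof.
move=> s0 st; have t0 : 0 < t by apply: lt_le_trans st.
set r := s / t.
have r0 : 0 <= r by rewrite divr_ge0 // ltW.
have r1 : r <= 1 by rewrite ler_pdivrMr // mul1r.
have E : s *: h + x = r *: (t *: h + x) + (1 - r) *: x.
  rewrite scalerDr scalerA /r mulfVK ?gt_eqF // scalerBl scale1r.
  by rewrite -addrA [(s / t) *: x + _]addrC subrK.
have N : `|s *: h + x| <= r * `|t *: h + x| + (1 - r) * `|x|.
  rewrite E; apply: (le_trans (ler_normD _ _)).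
  rewrite (@normrZ _ Y r) (@normrZ _ Y (1 - r)).
  by rewrite (ger0_norm r0) ger0_norm ?subr_ge0.
rewrite /q -(ler_pM2l s0) mulKt ?gt_eqF // mulrA.
have -> : s * t^-1 = r by [].
move: N; set A := `|t *: h + x|; set B := `|x|; set C := `|s *: h + x|.
nra.
Qed.

Lemma q_lower (x h : Y) (g : Y -> R) (t : R) : linear_on setT g ->
  (forall y, g y <= `|y|) -> g x = `|x| ->
  (0 < t -> g h <= q x h t) /\ (t < 0 -> q x h t <= g h).
Proof.
move=> lg gb gx.
have key : t * g h <= `|t *: h + x| - `|x|.
  have := gb (t *: h + x); rewrite lg // gx. lra.
split=> t0; rewrite /q.
- by rewrite -(ler_pM2l t0) mulKt ?gt_eqF.
- by rewrite -(ler_nM2l t0) mulKt ?lt_eqF.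
Qed.

Lemma cont_of (g : Y -> R) : dual_elt setT g -> continuous g.
Proof. by move=> [_ H]; apply/continuous_subspace_setT. Qed.

Section Back.
Variables (x : Y) (g1 : Y -> R).
Hypotheses (x0 : x != 0) (dg1 : dual_elt setT g1) (g1x : g1 x = `|x|)
  (g1b : forall y, `|g1 y| <= `|y|)
  (U : forall G, dual_elt setT G -> G x = `|x| -> dual_norm setT G = 1 -> G = g1)
  (wU : forall X : set Y, closed X -> lin_subspace X -> property_wU X).

Let lg1 := dg1.1.
Let nx : 0 < `|x|. Proof. by rewrite normr_gt0. Qed.
Let g1le y : g1 y <= `|y|. Proof. exact: le_trans (ler_norm _) (g1b y). Qed.

Lemma contra_case (h : Y) (eps : R) : 0 < eps ->
  ~ (forall t, 0 < t -> g1 h + eps < q x h t).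
Proof.
move=> e0 Hc; set c := g1 h + eps.
have cb t : `|x| + t * c <= `|t *: h + x|.
  have [t0|t0] := ltP 0 t.
    have := Hc t t0; rewrite /q -(ltr_pM2l t0) mulKt ?gt_eqF // -/c. lra.
  have := g1le (t *: h + x); rewrite lg1 // g1x.
  have : t * c <= t * g1 h by rewrite ler_wnM2l // /c lerDl ltW.
  lra.
have ch : `|c| <= `|h|.
  rewrite ler_norml; apply/andP; split.
    have := g1b h; rewrite ler_norml => /andP[+ _]. rewrite /c. lra.
  have := Hc 1 ltr01; rewrite /q invr1 mul1r scale1r.
  have := ler_normD h x. rewrite -/c. lra.
set lam := g1 h / `|x|.
set h' := h - lam *: x.
have g1h' : g1 h' = 0.
  by rewrite (linB subT lg1) // (linZ subT lg1) // g1x /lam mulfVK ?gt_eqF // subrr.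
have g1hl : g1 h = lam * `|x| by rewrite /lam mulfVK ?gt_eqF.
have [h'0|h'0] := eqVneq h' 0.
  have hE : h = lam *: x by apply/eqP; rewrite -subr_eq0 -/h' h'0.
  have l1 : 0 < `|lam| + 1 by have := normr_ge0 lam; lra.
  set t := (`|lam| + 1)^-1.
  have t0 : 0 < t by rewrite invr_gt0.
  have tl : t * (`|lam| + 1) = 1 by rewrite mulVf ?gt_eqF.
  have ll : - lam <= `|lam| by have := ler_norm (- lam); rewrite normrN.
  have tl0 : 0 <= t * lam + 1 by nra.
  have E2 : (t * lam) *: x + x = (t * lam + 1) *: x by rewrite scalerDl scale1r.
  have := Hc t t0; rewrite /q g1hl hE scalerA E2 normrZ ger0_norm //.
  have -> : t^-1 * ((t * lam + 1) * `|x| - `|x|) = lam * `|x|.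
    by field; rewrite gt_eqF.
  lra.
have two a' bb : a' * `|x| + bb * c <= `|a' *: x + bb *: h|.
  have [a0|a0] := ltP 0 a'.
    set r := bb / a'.
    have ar : a' * r = bb by rewrite /r mulrCA mulfV ?gt_eqF // mulr1.
    have -> : a' *: x + bb *: h = a' *: (r *: h + x).
      by rewrite scalerDr scalerA ar addrC.
    rewrite normrZ gtr0_norm //.
    have := cb r; rewrite -(ler_pM2l a0) mulrDr mulrA ar. lra.
  have := ler_normB (a' *: x + bb *: h) (a' *: x).
  have -> : a' *: x + bb *: h - a' *: x = bb *: h by rewrite addrC addKr.
  rewrite !normrZ (ler0_norm a0).
  have : bb * c <= `|bb| * `|h|.
    apply: le_trans (ler_norm _) _; rewrite normrM; apply: ler_wpM2l => //.
  lra.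
set P := fun y => y - (g1 y / `|x|) *: x.
set X2 := P @^-1` line h'.
have Plin a y z : P (a *: y + z) = a *: P y + P z.
  rewrite /P lg1 // mulrDl scalerDl scalerBr scalerA mulrA.
  rewrite opprD !addrA; congr (_ + _); rewrite addrAC //.
have P0 : P 0 = 0 by rewrite /P (lin0 subT lg1) mul0r scale0r subr0.
have sX2 : lin_subspace X2.
  split; first by exists 0; rewrite P0 scale0r.
  move=> a y z [b1 e1] [b2 e2]; exists (a * b1 + b2).
  by rewrite Plin e1 e2 scalerA scalerDl.
have cP : continuous P.
  move=> y; apply: cvgB; first exact: cvg_id.
  apply: (continuous_comp (f := fun y => g1 y / `|x|) (g := fun k : R => k *: x)).
    by apply: cvgMr_tmp; apply: cont_of.
  exact: scalel_continuous.
have cX2 : closed X2.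
  by apply: preimage_closed; [move=> y _; exact: cP | exact: line_closed].
set b := fun y => coef h' (P y).
have Pb y : X2 y -> P y = b y *: h'.
  by case=> s e; rewrite /b e coefZ.
have bl : linear_on X2 b.
  move=> a y z Xy Xz; rewrite /b Plin (Pb _ Xy) (Pb _ Xz) scalerA -scalerDl.
  by rewrite !coefZ.
set f2 := fun y => g1 y + eps * b y.
have lf2 : linear_on X2 f2.
  by move=> a y z Xy Xz; rewrite /f2 lg1 // bl //; ring.
have f2le y : X2 y -> f2 y <= `|y|.
  move=> Xy; set a := g1 y / `|x|.
  have ya : a * `|x| = g1 y by rewrite /a mulfVK ?gt_eqF.
  have E : (a - b y * lam) *: x + b y *: h = y.
    have := Pb _ Xy; rewrite /P -/a /h' => e.
    have ey : y = b y *: (h - lam *: x) + a *: x by rewrite -e subrK.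
    rewrite [RHS]ey scalerBl scalerBr scalerA.
    by rewrite [LHS]addrC addrA [RHS]addrAC.
  have := two (a - b y * lam) (b y); rewrite E /f2 /c.
  have : b y * (lam * `|x|) = b y * g1 h by rewrite g1hl.
  lra.
have f2b y : X2 y -> `|f2 y| <= `|y|.
  move=> Xy; rewrite ler_norml f2le // andbT.
  have := f2le _ (subN sX2 Xy); rewrite (linN sX2 lf2) // normrN. lra.
have df2 : dual_elt X2 f2.
  split => //; apply: (bounded_cont sX2 lf2 ler01) => y Xy.
  by rewrite mul1r; exact: f2b.
have Px : P x = 0 by rewrite /P g1x mulfV ?gt_eqF // scale1r subrr.
have X2x : X2 x by exists 0; rewrite scale0r Px.
have bx : b x = 0 by rewrite /b Px -(scale0r h') coefZ.
have f2x : f2 x = `|x| by rewrite /f2 bx mulr0 addr0 g1x.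
set u := `|x|^-1 *: x.
have X2u : X2 u by apply: subZ.
have nu : `|u| = 1.
  by rewrite /u normrZ ger0_norm ?invr_ge0 ?normr_ge0 // mulVf ?gt_eqF.
have f2u : f2 u = 1 by rewrite /u (linZ sX2 lf2) // f2x mulVf ?gt_eqF.
have n2 : dual_norm X2 f2 = 1.
  apply/eqP; rewrite eq_le; apply/andP; split.
    apply: (dual_norm_le sX2) => y Xy y1; exact: le_trans (f2b _ Xy) y1.
  have := dual_norm_ub sX2 df2 X2u; rewrite nu f2u normr1; apply; exact: lexx.
have [G [[dG [eG nG]] _]] := wU cX2 sX2 df2 (ex_intro _ u (conj X2u (conj nu (etrans f2u (esym n2))))).
have GE : G = g1 by apply: U => //; [rewrite eG // f2x | rewrite nG n2].
have Ph : P h = 1 *: h' by rewrite scale1r.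
have X2h : X2 h by exists 1.
have bh : b h = 1 by rewrite /b Ph coefZ.
have := eG h X2h; rewrite GE /f2 bh mulr1. lra.
Qed.

Lemma K h eps : 0 < eps ->
  exists2 t0 : R, 0 < t0 & forall t, 0 < t -> t <= t0 -> q x h t <= g1 h + eps.
Proof.
move=> e0; case: (pselect (exists t0, 0 < t0 /\ q x h t0 <= g1 h + eps)).
  case=> t0 [t0p H]; exists t0 => // t tp tt0.
  exact: le_trans (q_mono x h tp tt0) H.
move=> nH; exfalso; apply: (contra_case (h := h) e0) => t tp.
rewrite ltNge; apply/negP => H; apply: nH; exists t; split => //.
Qed.

Lemma q_neg h t : q x h t = - q x (- h) (- t).
Proof. by rewrite /q invrN scaleNr scalerN opprK mulNr opprK. Qed.

Lemma g1_cvg h : q x h @ 0^' --> g1 h.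
Proof.
apply/cvgrPdist_lt => e e0; apply/near0R.
have e2 : 0 < e / 2 by rewrite divr_gt0.
have [t0 t0p H0] := K h e2.
have [t1 t1p H1] := K (- h) e2.
exists (Num.min t0 t1); first by rewrite lt_min t0p t1p.
move=> t; rewrite lt_min => /andP[tt0 tt1] tne.
have g1N : g1 (- h) = - g1 h by rewrite (linN subT lg1).
have [tn|tp] := ltP t 0.
  have := (q_lower (x := x) h t lg1 g1le g1x).2 tn.
  rewrite ltr0_norm // in tt0 tt1.
  have := H1 (- t) ltac:(lra) ltac:(lra); rewrite g1N [q x h t]q_neg.
  rewrite ltr_norml. lra.
have tp' : 0 < t by rewrite lt_neqAle eq_sym tne tp.
have := (q_lower (x := x) h t lg1 g1le g1x).1 tp'.
rewrite gtr0_norm // in tt0 tt1.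
have := H0 t tp' ltac:(lra).
rewrite ltr_norml. lra.
Qed.
End Back.

Lemma backward : (forall X : set Y, closed X -> lin_subspace X -> property_wU X) ->
  norm_gateaux Y.
Proof.
move=> wU x x0.
have nx : 0 < `|x| by rewrite normr_gt0.
set X1 := line x.
set f1 := fun y => coef x y * `|x|.
have lf1 : linear_on X1 f1.
  move=> a y z [s ->] [t ->]; rewrite /f1 scalerA -scalerDl !coefZ //; ring.
have f1b y : X1 y -> `|f1 y| <= 1 * `|y|.
  case=> s ->; rewrite /f1 coefZ // normrM normrZ normr_id mul1r //.
have df1 : dual_elt X1 f1 := conj lf1 (bounded_cont (line_sub x) lf1 ler01 f1b).
set u := `|x|^-1 *: x.
have X1u : X1 u by exists (`|x|^-1).
have nu : `|u| = 1.
  by rewrite /u normrZ ger0_norm ?invr_ge0 ?normr_ge0 // mulVf ?gt_eqF.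
have f1u : f1 u = 1 by rewrite /f1 /u coefZ // mulVf ?gt_eqF.
have n1 : dual_norm X1 f1 = 1.
  apply/eqP; rewrite eq_le; apply/andP; split.
    apply: (dual_norm_le (line_sub x)) => y Xy y1.
    by apply: le_trans (f1b _ Xy) _; rewrite mul1r.
  have := dual_norm_ub (line_sub x) df1 X1u; rewrite nu f1u normr1; apply; exact: lexx.
have [g1 [[dg1 [eg1 ng1]] Ug]] := wU X1 (line_closed x0) (line_sub x) f1 df1
  (ex_intro _ u (conj X1u (conj nu (etrans f1u (esym n1))))).
have X1x : X1 x by exists 1; rewrite scale1r.
have g1x : g1 x = `|x|.
  rewrite eg1 // /f1; have -> : coef x x = 1 by rewrite -{2}[x]scale1r coefZ.
  by rewrite mul1r.
have g1b y : `|g1 y| <= `|y|.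
  by have := dual_norm_bound subT dg1 (I : setT y); rewrite ng1 n1 mul1r.
have U G : dual_elt setT G -> G x = `|x| -> dual_norm setT G = 1 -> G = g1.
  move=> dG Gx nG; apply: Ug; split => //; split.
    by move=> y [s ->]; rewrite (linZ subT dG.1) // Gx /f1 coefZ.
  by rewrite nG n1.
exists g1; split => // h.
apply: cvg_gat; exact: (g1_cvg x0 dg1 g1x g1b U wU).
Qed.

End S.

Unset Implicit Arguments.

Theorem proposition1p12 (R : realType) (Y : completeNormedModType R) :
  norm_gateaux Y <->
  (forall X : set Y, closed X -> lin_subspace X -> property_wU X).
Proof. split; [exact: forward | exact: backward]. Qed.
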